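(* Let $L:\mathcal{A}\to \mathcal{B}$ and $R:\mathcal{B}\to \mathcal{A}$ be contravariant functors between abelian categories. (1) Assume that $(L,R)$ is a left adjoint pair, i.e. there are natural isomorphisms ${\rm Hom}_{\mathcal{B}}(L(A),B)\cong {\rm Hom}_{\mathcal{A}}(R(B),A)$, with associated natural transformations $\varepsilon:LR\to 1_{\mathcal{B}}$ and $\eta:RL\to 1_{\mathcal{A}}$. Let $M,N$ be objects of $\mathcal{B}$ with $M,N\in {\rm Refl}(R)$. Then the following are equivalent: (i) $N$ is strongly $M$-Rickart in $\mathcal{B}$; (ii) $R(M)$ is dual strongly $R(N)$-Rickart in $\mathcal{A}$ and for every morphism $f:M\to N$, ${\rm Ker}(f)$ is $M$-cyclic; (iii) $R(M)$ is dual strongly $R(N)$-Rickart in $\mathcal{A}$ and for every morphism $f:M\to N$, ${\rm Ker}(f)\in {\rm Refl}(R)$. (2) Assume that $(L,R)$ is a right adjoint pair, i.e. there are natural isomorphisms ${\rm Hom}_{\mathcal{A}}(A,R(B))\cong {\rm Hom}_{\mathcal{B}}(B,L(A))$, with associated natural transformations $\varepsilon:1_{\mathcal{B}}\to LR$ and $\eta:1_{\mathcal{A}}\to RL$. Let $M,N$ be objects of $\mathcal{A}$ with $M,N\in {\rm Refl}(L)$. Then the following are equivalent: (i) $N$ is dual strongly $M$-Rickart in $\mathcal{A}$; (ii) $L(M)$ is strongly $L(N)$-Rickart in $\mathcal{B}$ and for every morphism $f:M\to N$, ${\rm Coker}(f)$ is $N$-cocyclic; (iii) $L(M)$ is strongly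 $L(N)$-Rickart in $\mathcal{B}$ and for every morphism $f:M\to N$, ${\rm Coker}(f)\in {\rm Refl}(L)$.
   Context: ${\rm Refl}(R)$ is the class of objects $B$ of $\mathcal{B}$ for which $\varepsilon_B$ is an isomorphism ($R$-reflexive objects); ${\rm Refl}(L)$ is the class of objects $A$ of $\mathcal{A}$ for which $\eta_A$ is an isomorphism ($L$-reflexive objects). For objects $X,Y$, $Y$ is $X$-cyclic if there is an epimorphism $X\to Y$, and $X$ is $Y$-cocyclic if there is a monomorphism $X\to Y$. A morphism $f:X\to Y$ is a section if $f'f=1_X$ for some $f'$, a retraction if $ff'=1_Y$ for some $f'$. A monomorphism $k:K\to X$ is fully invariant if for every $h:X\to X$ there is $\alpha:K\to K$ with $hk=k\alpha$; an epimorphism $c:X\to C$ is fully coinvariant if for every $h:X\to X$ there is $\gamma:C\to C$ with $ch=\gamma c$. $N$ is strongly $M$-Rickart if the kernel of every morphism $f:M\to N$ is a fully invariant section; $N$ is dual strongly $M$-Rickart if the cokernel of every morphism $f:M\to N$ is a fully coinvariant retraction. *)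

(* Defs.v *)
Set Implicit Arguments.
Unset Strict Implicit.

Record Category : Type := {
  Obj :> Type;
  Hom : Obj -> Obj -> Type;
  comp : forall X Y Z : Obj, Hom Y Z -> Hom X Y -> Hom X Z;
  idm : forall X : Obj, Hom X X;
  comp_assoc : forall W X Y Z (f : Hom W X) (g : Hom X Y) (h : Hom Y Z),
      comp h (comp g f) = comp (comp h g) f;
  comp_id_l : forall X Y (f : Hom X Y), comp (idm Y) f = f;
  comp_id_r : forall X Y (f : Hom X Y), comp f (idm X) = f
}.
Arguments Hom {c} X Y.
Arguments comp {c X Y Z} g f.
Arguments idm {c} X.
Notation "g ∘ f" := (comp g f) (at level 40, left associativity).

Section Morphisms.
Context {C : Category}.

Definition mono {X Y : C} (f : Hom X Y) : Prop :=
  forall W (g h : Hom W X), f ∘ g = f ∘ h -> g = h.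
Definition epi {X Y : C} (f : Hom X Y) : Prop :=
  forall W (g h : Hom Y W), g ∘ f = h ∘ f -> g = h.
Definition iso {X Y : C} (f : Hom X Y) : Prop :=
  exists g : Hom Y X, g ∘ f = idm X /\ f ∘ g = idm Y.
Definition section {X Y : C} (f : Hom X Y) : Prop :=
  exists f' : Hom Y X, f' ∘ f = idm X.
Definition retraction {X Y : C} (f : Hom X Y) : Prop :=
  exists f' : Hom Y X, f ∘ f' = idm Y.

Definition is_kernel (z : forall X Y : C, Hom X Y) {X Y K : C}
    (f : Hom X Y) (k : Hom K X) : Prop :=
  f ∘ k = z K Y /\
  forall W (g : Hom W X), f ∘ g = z W Y -> exists! u : Hom W K, k ∘ u = g.
Definition is_cokernel (z : forall X Y : C, Hom X Y) {X Y Q : C}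
    (f : Hom X Y) (c : Hom Y Q) : Prop :=
  c ∘ f = z X Q /\
  forall W (g : Hom Y W), g ∘ f = z X W -> exists! u : Hom Q W, u ∘ c = g.

(** Y is X-cyclic: there is an epimorphism X -> Y *)
Definition cyclic (X Y : C) : Prop := exists p : Hom X Y, epi p.
(** X is Y-cocyclic: there is a monomorphism X -> Y *)
Definition cocyclic (X Y : C) : Prop := exists i : Hom X Y, mono i.

Definition fully_invariant {K X : C} (k : Hom K X) : Prop :=
  mono k /\ forall h : Hom X X, exists alpha : Hom K K, h ∘ k = k ∘ alpha.
Definition fully_coinvariant {X Q : C} (c : Hom X Q) : Prop :=
  epi c /\ forall h : Hom X X, exists gamma : Hom Q Q, c ∘ h = gamma ∘ c.
End Morphisms.

Record Abelian (C : Category) : Type := {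
  zero : forall X Y : C, Hom X Y;
  add : forall X Y : C, Hom X Y -> Hom X Y -> Hom X Y;
  opp : forall X Y : C, Hom X Y -> Hom X Y;
  add_assoc : forall X Y (f g h : Hom X Y), add f (add g h) = add (add f g) h;
  add_comm : forall X Y (f g : Hom X Y), add f g = add g f;
  add_0l : forall X Y (f : Hom X Y), add (zero X Y) f = f;
  add_oppr : forall X Y (f : Hom X Y), add f (opp f) = zero X Y;
  comp_addl : forall X Y Z (f : Hom X Y) (g g' : Hom Y Z),
      (add g g') ∘ f = add (g ∘ f) (g' ∘ f);
  comp_addr : forall X Y Z (f f' : Hom X Y) (g : Hom Y Z),
      g ∘ (add f f') = add (g ∘ f) (g ∘ f');
  zobj : C;
  zobj_initial : forall X (f g : Hom zobj X), f = g;
  zobj_terminal : forall X (f g : Hom X zobj), f = g;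
  biproducts : forall X Y : C, exists (P : C) (i1 : Hom X P) (i2 : Hom Y P)
      (p1 : Hom P X) (p2 : Hom P Y),
      p1 ∘ i1 = idm X /\ p2 ∘ i2 = idm Y /\ p1 ∘ i2 = zero Y X /\
      p2 ∘ i1 = zero X Y /\ add (i1 ∘ p1) (i2 ∘ p2) = idm P;
  kernels_exist : forall X Y (f : Hom X Y),
      exists (K : C) (k : Hom K X), is_kernel zero f k;
  cokernels_exist : forall X Y (f : Hom X Y),
      exists (Q : C) (c : Hom Y Q), is_cokernel zero f c;
  mono_normal : forall X Y (f : Hom X Y), mono f ->
      exists (Z : C) (g : Hom Y Z), is_kernel zero g f;
  epi_normal : forall X Y (f : Hom X Y), epi f ->
      exists (Z : C) (g : Hom Z X), is_cokernel zero g f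
}.
Arguments zero {C} a X Y.

Section Rickart.
Context {C : Category} (H : Abelian C).
(** N is strongly M-Rickart: the kernel of every f : M -> N is a fully
    invariant section (for every choice of kernel). *)
Definition strongly_rickart (M N : C) : Prop :=
  forall (f : Hom M N) (K : C) (k : Hom K M),
    is_kernel (zero H) f k -> section k /\ fully_invariant k.
(** N is dual strongly M-Rickart: the cokernel of every f : M -> N is a fully
    coinvariant retraction. *)
Definition dual_strongly_rickart (M N : C) : Prop :=
  forall (f : Hom M N) (Q : C) (c : Hom N Q),
    is_cokernel (zero H) f c -> retraction c /\ fully_coinvariant c.
End Rickart.

Record CoFunctor (C D : Category) : Type := {
  fobj :> C -> D;
  fmap : forall X Y : C, Hom X Y -> Hom (fobj Y) (fobj X);
  fmap_id : forall X : C, fmap (idm X) = idm (fobj X);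
  fmap_comp : forall X Y Z (f : Hom X Y) (g : Hom Y Z),
      fmap (g ∘ f) = fmap f ∘ fmap g
}.
Arguments fmap {C D} c {X Y} _.

Record LeftAdj {CA CB : Category} (L : CoFunctor CA CB) (R : CoFunctor CB CA)
  : Type := {
  ladj : forall (X : CA) (Y : CB), Hom (L X) Y -> Hom (R Y) X;
  ladj_inv : forall (X : CA) (Y : CB), Hom (R Y) X -> Hom (L X) Y;
  ladjK : forall X Y (g : Hom (L X) Y), ladj_inv (ladj g) = g;
  ladj_invK : forall X Y (p : Hom (R Y) X), ladj (ladj_inv p) = p;
  ladj_natA : forall X' X Y (a : Hom X' X) (g : Hom (L X') Y),
      ladj (g ∘ fmap L a) = a ∘ ladj g;
  ladj_natB : forall X Y Y' (b : Hom Y Y') (g : Hom (L X) Y),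
      ladj (b ∘ g) = ladj g ∘ fmap R b
}.
Arguments ladj {CA CB L R} l {X Y} _.
Arguments ladj_inv {CA CB L R} l {X Y} _.

Definition lcounit {CA CB} {L : CoFunctor CA CB} {R : CoFunctor CB CA}
  (adj : LeftAdj L R) (Y : CB) : Hom (L (R Y)) Y := ladj_inv adj (idm (R Y)).
Definition lunit {CA CB} {L : CoFunctor CA CB} {R : CoFunctor CB CA}
  (adj : LeftAdj L R) (X : CA) : Hom (R (L X)) X := ladj adj (idm (L X)).
Definition ReflR_left {CA CB} {L : CoFunctor CA CB} {R : CoFunctor CB CA}
  (adj : LeftAdj L R) (Y : CB) : Prop := iso (lcounit adj Y).

Record RightAdj {CA CB : Category} (L : CoFunctor CA CB) (R : CoFunctor CB CA)
  : Type := {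
  radj : forall (X : CA) (Y : CB), Hom X (R Y) -> Hom Y (L X);
  radj_inv : forall (X : CA) (Y : CB), Hom Y (L X) -> Hom X (R Y);
  radjK : forall X Y (p : Hom X (R Y)), radj_inv (radj p) = p;
  radj_invK : forall X Y (g : Hom Y (L X)), radj (radj_inv g) = g;
  radj_natA : forall X' X Y (a : Hom X' X) (p : Hom X (R Y)),
      radj (p ∘ a) = fmap L a ∘ radj p;
  radj_natB : forall X Y' Y (b : Hom Y' Y) (p : Hom X (R Y)),
      radj (fmap R b ∘ p) = radj p ∘ b
}.
Arguments radj {CA CB L R} r {X Y} _.
Arguments radj_inv {CA CB L R} r {X Y} _.

Definition rcounit {CA CB} {L : CoFunctor CA CB} {R : CoFunctor CB CA}
  (adj : RightAdj L R) (Y : CB) : Hom Y (L (R Y)) := radj adj (idm (R Y)).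
Definition runit {CA CB} {L : CoFunctor CA CB} {R : CoFunctor CB CA}
  (adj : RightAdj L R) (X : CA) : Hom X (R (L X)) := radj_inv adj (idm (L X)).
Definition ReflL_right {CA CB} {L : CoFunctor CA CB} {R : CoFunctor CB CA}
  (adj : RightAdj L R) (X : CA) : Prop := iso (runit adj X).

(* Main.v *)
Require Import Defs.

Section Add.
Context {C : Category} (H : Abelian C).

Lemma add_0r' (X Y : C) (f : Hom X Y) : add H f (zero H X Y) = f.
Proof. rewrite add_comm. apply add_0l. Qed.

Lemma idem_zero (X Y : C) (x : Hom X Y) : add H x x = x -> x = zero H X Y.
Proof.
  intro Hx. rewrite <- (add_oppr H x).
  transitivity (add H (add H x x) (opp H x)).
  - rewrite <- add_assoc, add_oppr, add_0r'. reflexivity.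
  - rewrite Hx. reflexivity.
Qed.

Lemma comp_0l (X Y Z : C) (f : Hom X Y) : zero H Y Z ∘ f = zero H X Z.
Proof.
  apply idem_zero. rewrite <- comp_addl, add_0l. reflexivity.
Qed.

Lemma comp_0r (X Y Z : C) (g : Hom Y Z) : g ∘ zero H X Y = zero H X Z.
Proof.
  apply idem_zero. rewrite <- comp_addr, add_0l. reflexivity.
Qed.

Lemma kernel_mono (X Y K : C) (f : Hom X Y) (k : Hom K X) :
  is_kernel (zero H) f k -> mono k.
Proof.
  intros [Hk Hu] W g h E.
  assert (E0 : f ∘ (k ∘ g) = zero H W Y) by
    (rewrite comp_assoc, Hk; apply comp_0l).
  destruct (Hu W (k ∘ g) E0) as [u [_ Hun]].
  rewrite <- (Hun g eq_refl). apply Hun. symmetry; exact E.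
Qed.
End Add.

Lemma retraction_epi {C : Category} (X Y : C) (f : Hom X Y) : retraction f -> epi f.
Proof.
  intros [f' Hf] W g h E.
  rewrite <- (comp_id_r g), <- (comp_id_r h), <- Hf, !comp_assoc, E.
  reflexivity.
Qed.

Lemma iso_epi {C : Category} (X Y : C) (f : Hom X Y) : iso f -> epi f.
Proof. intros [g [_ Hg]]. apply retraction_epi. exists g. exact Hg. Qed.

Section Part1.
Context (CA CB : Category) (HA : Abelian CA) (HB : Abelian CB)
  (L : CoFunctor CA CB) (R : CoFunctor CB CA) (adj : LeftAdj L R).

Lemma ladj_inj X Y (g h : Hom (L X) Y) : ladj adj g = ladj adj h -> g = h.
Proof. intro E. rewrite <- (ladjK adj g), <- (ladjK adj h), E. reflexivity. Qed.

Lemma R_eq (Y Y' : CB) (h : Hom Y Y') : fmap R h = ladj adj (h ∘ lcounit adj Y).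
Proof.
  unfold lcounit. rewrite ladj_natB, ladj_invK, comp_id_l. reflexivity.
Qed.

Lemma out_RZ (W : CA) (u v : Hom (R (zobj HB)) W) : u = v.
Proof.
  rewrite <- (ladj_invK adj u), <- (ladj_invK adj v).
  f_equal. apply zobj_terminal.
Qed.

Lemma R_zero (X Y : CB) : fmap R (zero HB X Y) = zero HA (R Y) (R X).
Proof.
  rewrite <- (comp_0l HB _ _ _ (zero HB X (zobj HB))).
  rewrite fmap_comp.
  rewrite (out_RZ _ (fmap R (zero HB X (zobj HB))) (zero HA _ _)).
  apply comp_0l.
Qed.

Lemma ladj_zero (X : CA) (Y : CB) : ladj adj (zero HB (L X) Y) = zero HA (R Y) X.
Proof.
  rewrite <- (comp_id_r (zero HB (L X) Y)), ladj_natB, R_zero.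
  apply comp_0r.
Qed.

Lemma R_full (M Y : CB) (g : Hom (R Y) (R M)) :
  ReflR_left adj M -> exists h : Hom M Y, fmap R h = g.
Proof.
  intros [e [He1 He2]].
  exists (ladj_inv adj g ∘ e). rewrite R_eq, <- comp_assoc, He1, comp_id_r.
  apply ladj_invK.
Qed.

Lemma R_faithful (K Y : CB) (h h' : Hom K Y) :
  epi (lcounit adj K) -> fmap R h = fmap R h' -> h = h'.
Proof.
  intros Ep E. rewrite !R_eq in E. apply ladj_inj in E. apply Ep. exact E.
Qed.

Lemma eps_nat (Y' Y : CB) (b : Hom Y' Y) :
  lcounit adj Y ∘ fmap L (fmap R b) = b ∘ lcounit adj Y'.
Proof.
  apply ladj_inj. rewrite ladj_natA, ladj_natB. unfold lcounit.
  rewrite !ladj_invK, comp_id_l, comp_id_r. reflexivity.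
Qed.

Lemma ker_coker (M N K : CB) (f : Hom M N) (k : Hom K M) :
  is_kernel (zero HB) f k -> is_cokernel (zero HA) (fmap R f) (fmap R k).
Proof.
  intros [Hk Hu]. split.
  - rewrite <- fmap_comp, Hk. apply R_zero.
  - intros W g Hg.
    assert (E : f ∘ ladj_inv adj g = zero HB (L W) N).
    { apply ladj_inj. rewrite ladj_natB, ladj_invK, Hg, ladj_zero. reflexivity. }
    destruct (Hu _ _ E) as [y [Hy Hyu]].
    exists (ladj adj y). split.
    + rewrite <- ladj_natB, Hy. apply ladj_invK.
    + intros u' Hu'. rewrite <- (ladj_invK adj u'). f_equal. apply Hyu.
      apply ladj_inj. rewrite ladj_natB, !ladj_invK. exact Hu'.
Qed.

Lemma coker_unique (X Y Q Q' : CA) (g : Hom X Y) (c : Hom Y Q) (c' : Hom Y Q') :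
  is_cokernel (zero HA) g c -> is_cokernel (zero HA) g c' ->
  exists (phi : Hom Q' Q) (psi : Hom Q Q'), phi ∘ c' = c /\ psi ∘ c = c' /\ phi ∘ psi = idm Q.
Proof.
  intros [Hc Hcu] [Hc' Hc'u].
  destruct (Hc'u _ c Hc) as [phi [Hphi _]].
  destruct (Hcu _ c' Hc') as [psi [Hpsi _]].
  exists phi, psi. split; [exact Hphi|]. split; [exact Hpsi|].
  destruct (Hcu _ c Hc) as [w [_ Hw]].
  transitivity w; [symmetry|]; apply Hw.
  - rewrite <- comp_assoc, Hpsi. exact Hphi.
  - apply comp_id_l.
Qed.

Lemma section_refl (M K : CB) (k : Hom K M) :
  ReflR_left adj M -> section k -> ReflR_left adj K.
Proof.
  intros [e [He1 He2]] [p Hp].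
  exists (fmap L (fmap R p) ∘ e ∘ k). split.
  - rewrite <- !comp_assoc, <- eps_nat, (comp_assoc _ _ e), He1, comp_id_l.
    rewrite <- fmap_comp, <- fmap_comp, Hp, !fmap_id. reflexivity.
  - rewrite !comp_assoc, eps_nat, <- (comp_assoc e (lcounit adj M) p), He2, comp_id_r.
    exact Hp.
Qed.

Lemma part1 (M N : CB) : ReflR_left adj M -> ReflR_left adj N ->
     (strongly_rickart HB M N <->
        (dual_strongly_rickart HA (R N) (R M) /\
         forall (f : Hom M N) (K : CB) (k : Hom K M),
           is_kernel (zero HB) f k -> cyclic M K)) /\
     (strongly_rickart HB M N <->
        (dual_strongly_rickart HA (R N) (R M) /\
         forall (f : Hom M N) (K : CB) (k : Hom K M),
           is_kernel (zero HB) f k -> ReflR_left adj K)).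
Proof.
  intros RM RN.
  assert (Fwd : strongly_rickart HB M N -> dual_strongly_rickart HA (R N) (R M)).
  { intros SR g Q c Hc.
    destruct (R_full _ _ g RM) as [h Hh]. subst g.
    destruct (kernels_exist HB h) as [K [k Hk]].
    destruct (SR h K k Hk) as [[p Hp] [_ FI]].
    destruct (coker_unique _ _ _ _ _ _ _ Hc (ker_coker _ _ _ _ _ Hk))
      as [phi [psi [H1 [H2 H3]]]].
    assert (Ret : retraction c).
    { exists (fmap R p ∘ psi). rewrite comp_assoc, <- H1, <- (comp_assoc _ _ phi),
        <- fmap_comp, Hp, fmap_id, comp_id_r. exact H3. }
    split; [exact Ret|]. split; [apply retraction_epi; exact Ret|].
    intro t. destruct (R_full _ _ t RM) as [s Hs]. subst t.
    destruct (FI s) as [al Hal].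
    exists (phi ∘ fmap R al ∘ psi).
    rewrite <- !comp_assoc, H2, <- H1, <- !comp_assoc, <- !fmap_comp, Hal.
    reflexivity. }
  assert (Bwd : dual_strongly_rickart HA (R N) (R M) ->
    (forall (f : Hom M N) (K : CB) (k : Hom K M),
           is_kernel (zero HB) f k -> epi (lcounit adj K)) -> strongly_rickart HB M N).
  { intros DR Ep f K k Hk. specialize (Ep f K k Hk).
    destruct (DR _ _ _ (ker_coker _ _ _ _ _ Hk)) as [[q Hq] [_ FC]].
    destruct (R_full _ _ q RM) as [p Hp]. subst q.
    split.
    - exists p. apply (R_faithful _ _ _ _ Ep). rewrite fmap_comp, Hq, fmap_id. reflexivity.
    - split; [exact (kernel_mono _ _ _ _ _ _ Hk)|].
      intro s. destruct (FC (fmap R s)) as [ga Hga].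
      destruct Hk as [Hk0 Hku].
      assert (E : f ∘ (s ∘ k) = zero HB K N).
      { apply (R_faithful _ _ _ _ Ep). rewrite R_zero, !fmap_comp.
        rewrite Hga, <- comp_assoc, <- fmap_comp, Hk0, R_zero. apply comp_0r. }
      destruct (Hku _ _ E) as [al [Hal _]]. exists al. symmetry. exact Hal. }
  split; split.
  - intro SR. split; [exact (Fwd SR)|]. intros f K k Hk.
    destruct (SR f K k Hk) as [[p Hp] _]. exists p. apply retraction_epi.
    exists k. exact Hp.
  - intros [DR Cy]. apply Bwd; [exact DR|]. intros f K k Hk.
    destruct (Cy f K k Hk) as [pi Hpi]. destruct RM as [e [He1 He2]].
    intros W g h E.
    apply Hpi. rewrite <- (comp_id_r (g ∘ pi)), <- (comp_id_r (h ∘ pi)), <- He2,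
      !comp_assoc, <- !(comp_assoc (lcounit adj M)), <- !eps_nat, !comp_assoc, E.
    reflexivity.
  - intro SR. split; [exact (Fwd SR)|]. intros f K k Hk.
    destruct (SR f K k Hk) as [Sk _]. exact (section_refl _ _ _ RM Sk).
  - intros [DR Rf]. apply Bwd; [exact DR|]. intros f K k Hk.
    apply iso_epi. exact (Rf f K k Hk).
Qed.
End Part1.

Definition opC (C : Category) : Category.
Proof.
  refine {| Obj := Obj C; Hom := fun X Y => @Hom C Y X;
            comp := fun X Y Z g f => @comp C Z Y X f g;
            idm := fun X => @idm C X |}.
  - intros. symmetry. apply comp_assoc.
  - intros. apply comp_id_r.
  - intros. apply comp_id_l.
Defined.

Definition opA (C : Category) (H : Abelian C) : Abelian (opC C).
Proof.
  refine (@Build_Abelian (opC C) (fun X Y => zero H Y X)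
     (fun X Y f g => @add C H Y X f g) (fun X Y f => @opp C H Y X f)
     _ _ _ _ _ _ (zobj H) _ _ _ _ _ _ _).
  - intros X Y f g h; exact (@add_assoc C H Y X f g h).
  - intros X Y f g; exact (@add_comm C H Y X f g).
  - intros X Y f; exact (@add_0l C H Y X f).
  - intros X Y f; exact (@add_oppr C H Y X f).
  - intros X Y Z f g g'; exact (@comp_addr C H Z Y X g g' f).
  - intros X Y Z f f' g; exact (@comp_addl C H Z Y X g f f').
  - intros X f g; exact (@zobj_terminal C H X f g).
  - intros X f g; exact (@zobj_initial C H X f g).
  - intros X Y. destruct (biproducts H X Y) as [P [i1 [i2 [p1 [p2 [E1 [E2 [E3 [E4 E5]]]]]]]]].
    exists P, p1, p2, i1, i2. simpl. repeat split; auto.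
  - intros X Y f. destruct (cokernels_exist H f) as [Q [c Hc]]. exists Q, c. exact Hc.
  - intros X Y f. destruct (kernels_exist H f) as [Q [c Hc]]. exists Q, c. exact Hc.
  - intros X Y f Hf. destruct (@epi_normal C H Y X f Hf) as [Z [g Hg]]. exists Z, g. exact Hg.
  - intros X Y f Hf. destruct (@mono_normal C H Y X f Hf) as [Z [g Hg]]. exists Z, g. exact Hg.
Defined.

Definition opF (C D : Category) (F : CoFunctor C D) : CoFunctor (opC C) (opC D).
Proof.
  refine (@Build_CoFunctor (opC C) (opC D) (fun X : opC C => (F X : opC D))
            (fun X Y (f : @Hom (opC C) X Y) => @fmap C D F Y X f) _ _).
  - intros X; exact (@fmap_id C D F X).
  - intros X Y Z f g; exact (@fmap_comp C D F Z Y X g f).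
Defined.

Definition opAdj (CA CB : Category) (L : CoFunctor CA CB) (R : CoFunctor CB CA)
  (adj : RightAdj L R) : @LeftAdj (opC CB) (opC CA) (opF _ _ R) (opF _ _ L).
Proof.
  refine (@Build_LeftAdj (opC CB) (opC CA) (opF _ _ R) (opF _ _ L)
    (fun (X : opC CB) (Y : opC CA) g => @radj _ _ _ _ adj Y X g)
    (fun (X : opC CB) (Y : opC CA) g => @radj_inv _ _ _ _ adj Y X g) _ _ _ _).
  - intros X Y g; exact (@radjK _ _ _ _ adj Y X g).
  - intros X Y g; exact (@radj_invK _ _ _ _ adj Y X g).
  - intros X' X Y a g. simpl in *. apply radj_natB.
  - intros X Y Y' b g. simpl in *. apply radj_natA.
Defined.

Lemma refl_op (CA CB : Category) (L : CoFunctor CA CB) (R : CoFunctor CB CA)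
  (adj : RightAdj L R) (X : CA) :
  ReflL_right adj X <-> @ReflR_left (opC CB) (opC CA) _ _ (opAdj _ _ _ _ adj) X.
Proof.
  unfold ReflL_right, ReflR_left, iso, lcounit, runit. simpl.
  split; intros [g [H1 H2]]; exists g; split; assumption.
Qed.

Theorem theorem4p10 (CA CB : Category) (HA : Abelian CA) (HB : Abelian CB)
  (L : CoFunctor CA CB) (R : CoFunctor CB CA) :
  (* (1) left adjoint pair *)
  (forall (adj : LeftAdj L R) (M N : CB),
     ReflR_left adj M -> ReflR_left adj N ->
     (strongly_rickart HB M N <->
        (dual_strongly_rickart HA (R N) (R M) /\
         forall (f : Hom M N) (K : CB) (k : Hom K M),
           is_kernel (zero HB) f k -> cyclic M K)) /\
     (strongly_rickart HB M N <->
        (dual_strongly_rickart HA (R N) (R M) /\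
         forall (f : Hom M N) (K : CB) (k : Hom K M),
           is_kernel (zero HB) f k -> ReflR_left adj K))) /\
  (* (2) right adjoint pair *)
  (forall (adj : RightAdj L R) (M N : CA),
     ReflL_right adj M -> ReflL_right adj N ->
     (dual_strongly_rickart HA M N <->
        (strongly_rickart HB (L N) (L M) /\
         forall (f : Hom M N) (Q : CA) (c : Hom N Q),
           is_cokernel (zero HA) f c -> cocyclic Q N)) /\
     (dual_strongly_rickart HA M N <->
        (strongly_rickart HB (L N) (L M) /\
         forall (f : Hom M N) (Q : CA) (c : Hom N Q),
           is_cokernel (zero HA) f c -> ReflL_right adj Q))).
Proof.
  split.
  - intros adj M N. apply part1.
  - intros adj M N RM RN.
    destruct (part1 (opC CB) (opC CA) (opA _ HB) (opA _ HA) (opF _ _ R) (opF _ _ L)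
      (opAdj _ _ _ _ adj) N M (proj1 (refl_op _ _ _ _ adj N) RN)
      (proj1 (refl_op _ _ _ _ adj M) RM)) as [P1 P2].
    split; [exact P1|].
    split.
    + intro D. destruct (proj1 P2 D) as [S F]. split; [exact S|].
      intros f Q c Hc. apply (refl_op _ _ _ _ adj). exact (F f Q c Hc).
    + intros [S F]. apply (proj2 P2). split; [exact S|].
      intros f Q c Hc. apply (refl_op _ _ _ _ adj). exact (F f Q c Hc).
Qed.
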